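(* Let $M,N\ge1$ be integers, $\mathbf G\in\mathbb C^{N\times M}$, $\mathbf h_{\mathrm d}\in\mathbb C^M$, $\mathbf h_{\mathrm r}\in\mathbb C^N$, $P_0>0$, $\Gamma>0$, $\sigma^2>0$. For $\mathbf v\in\mathbb C^N$ let $\mathbf\Phi=\mathrm{diag}(\mathbf v)$ and $\mathbf h(\mathbf v)=\mathbf h_{\mathrm d}+\mathbf G^H\mathbf\Phi^H\mathbf h_{\mathrm r}$. For a positive semidefinite $\mathbf R\in\mathbb C^{M\times M}$ let $f(\mathbf R)=\mathrm{tr}\big((\mathbf G\mathbf R\mathbf G^H)^{-1}\big)$ when $\mathbf G\mathbf R\mathbf G^H$ is invertible, and $f(\mathbf R)=+\infty$ otherwise. Consider (single user, $K=1$): (P1): minimize $f(\mathbf w\mathbf w^H+\mathbf R_0)$ over $\mathbf w\in\mathbb C^M$, Hermitian $\mathbf R_0\in\mathbb C^{M\times M}$, and $\mathbf v\in\mathbb C^N$, subject to $\frac{|\mathbf h(\mathbf v)^H\mathbf w|^2}{\mathbf h(\mathbf v)^H\mathbf R_0\mathbf h(\mathbf v)+\sigma^2}\ge\Gamma$, $\|\mathbf w\|^2+\mathrm{tr}(\mathbf R_0)\le P_0$, $\mathbf R_0\succeq\mathbf 0$, and $|v_n|=1$ for all $n=1,\dots,N$; (P2): the same problem with the SINR constraint replaced by $\frac{|\mathbf h(\mathbf v)^H\mathbf w|^2}{\sigma^2}\ge\Gamma$. Then the optimal values of (P1) and (P2) are identical.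
   Context: Setting: an IRS-enabled integrated sensing and communication system with a base station of $M$ antennas, an IRS with $N$ unit-modulus reflecting elements (reflection vector $\mathbf v$), and one single-antenna user. $\mathbf h_{\mathrm d}^H$ is the base-station-to-user channel, $\mathbf h_{\mathrm r}^H$ the IRS-to-user channel, $\mathbf G$ the base-station-to-IRS channel, $\mathbf w$ the information beamformer, $\mathbf R_0$ the dedicated sensing-signal covariance. (P1) corresponds to a user that cannot cancel sensing-signal interference, (P2) to one that can. The objective is (up to a positive constant) the Cramér-Rao bound for estimating the target response matrix with respect to the IRS. *)

(* Defs.v *)
From HB Require Import structures.
From mathcomp Require Import all_boot all_order all_algebra.
From mathcomp Require Import complex.
From mathcomp Require Import reals constructive_ereal classical_sets ereal.
Set Implicit Arguments. Unset Strict Implicit. Unset Printing Implicit Defensive.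
Import Order.TTheory GRing.Theory Num.Theory.
Local Open Scope ring_scope.
Local Open Scope complex_scope.

Definition ctmx (R : rcfType) m n (A : 'M[R[i]]_(m, n)) : 'M[R[i]]_(n, m) :=
  (map_mx conjc A)^T.

Definition hermitian (R : rcfType) n (A : 'M[R[i]]_n) : Prop := ctmx A = A.

(* A >= 0 : x^H A x is real and nonnegative for every x *)
Definition psd (R : rcfType) n (A : 'M[R[i]]_n) : Prop :=
  forall x : 'cV[R[i]]_n, 0 <= (ctmx x *m A *m x) 0 0.

Definition heff (R : rcfType) M N (G : 'M[R[i]]_(N, M)) (hd : 'cV[R[i]]_M)
  (hr : 'cV[R[i]]_N) (v : 'cV[R[i]]_N) : 'cV[R[i]]_M :=
  hd + ctmx G *m ctmx (diag_mx v^T) *m hr.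

(* f(R) = tr((G R G^H)^{-1}) if G R G^H invertible, +oo otherwise.
   The trace of the inverse of the (Hermitian) matrix G R G^H is real;
   we take its real part to obtain an extended real value. *)
Definition crb (R : realType) M N (G : 'M[R[i]]_(N, M)) (Rx : 'M[R[i]]_M)
  : \bar R :=
  let A := G *m Rx *m ctmx G in
  if A \in unitmx then ((complex.Re (\tr (invmx A))))%:E else +oo%E.

Definition common_feasible (R : realType) M N (P0 : R)
  (w : 'cV[R[i]]_M) (R0 : 'M[R[i]]_M) (v : 'cV[R[i]]_N) : Prop :=
  [/\ hermitian R0,
      \sum_(i < M) `|w i 0| ^+ 2 + \tr R0 <= P0%:C,
      psd R0 &
      forall n : 'I_N, `|v n 0| = 1].

Definition feasible_P1 (R : realType) M N (G : 'M[R[i]]_(N, M))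
  (hd : 'cV[R[i]]_M) (hr : 'cV[R[i]]_N) (P0 Gam sigma2 : R)
  (w : 'cV[R[i]]_M) (R0 : 'M[R[i]]_M) (v : 'cV[R[i]]_N) : Prop :=
  let h := heff G hd hr v in
  Gam%:C <= `|(ctmx h *m w) 0 0| ^+ 2 / ((ctmx h *m R0 *m h) 0 0 + sigma2%:C)
  /\ common_feasible P0 w R0 v.

Definition feasible_P2 (R : realType) M N (G : 'M[R[i]]_(N, M))
  (hd : 'cV[R[i]]_M) (hr : 'cV[R[i]]_N) (P0 Gam sigma2 : R)
  (w : 'cV[R[i]]_M) (R0 : 'M[R[i]]_M) (v : 'cV[R[i]]_N) : Prop :=
  let h := heff G hd hr v in
  Gam%:C <= `|(ctmx h *m w) 0 0| ^+ 2 / sigma2%:C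
  /\ common_feasible P0 w R0 v.

Definition optval (R : realType) M N (G : 'M[R[i]]_(N, M))
  (feas : 'cV[R[i]]_M -> 'M[R[i]]_M -> 'cV[R[i]]_N -> Prop) : \bar R :=
  ereal_inf [set crb G (x.1.1 *m ctmx x.1.1 + x.1.2) | x in
      [set x : 'cV[R[i]]_M * 'M[R[i]]_M * 'cV[R[i]]_N | feas x.1.1 x.1.2 x.2]]%classic.

(* Main.v *)
Require Import Defs.
From HB Require Import structures.
From mathcomp Require Import all_boot all_order all_algebra.
From mathcomp Require Import complex.
From mathcomp Require Import reals constructive_ereal classical_sets ereal.
Set Implicit Arguments. Unset Strict Implicit. Unset Printing Implicit Defensive.
Import Order.TTheory GRing.Theory Num.Theory.
Local Open Scope ring_scope.
Local Open Scope complex_scope.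

Section Ct.
Variable R : rcfType.
Local Notation C := R[i].

Lemma ctmx_mul m n p (A : 'M[C]_(m, n)) (B : 'M[C]_(n, p)) :
  ctmx (A *m B) = ctmx B *m ctmx A.
Proof. by rewrite /ctmx map_mxM trmx_mul. Qed.

Lemma ctmxK m n (A : 'M[C]_(m, n)) : ctmx (ctmx A) = A.
Proof. by apply/matrixP => i j; rewrite /ctmx !mxE conjcK. Qed.

Lemma ctmxD m n (A B : 'M[C]_(m, n)) : ctmx (A + B) = ctmx A + ctmx B.
Proof. by apply/matrixP => i j; rewrite /ctmx !mxE rmorphD. Qed.

Lemma ctmxB m n (A B : 'M[C]_(m, n)) : ctmx (A - B) = ctmx A - ctmx B.
Proof. by apply/matrixP => i j; rewrite /ctmx !mxE rmorphB. Qed.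

Lemma ctmxZ m n a (A : 'M[C]_(m, n)) : ctmx (a *: A) = conjc a *: ctmx A.
Proof. by apply/matrixP => i j; rewrite /ctmx !mxE rmorphM. Qed.

Lemma ctmx1 n : ctmx (1%:M : 'M[C]_n) = 1%:M.
Proof. by apply/matrixP => i j; rewrite /ctmx !mxE rmorphMn rmorph1 eq_sym. Qed.

Lemma mx11E (A B : 'M[C]_1) : (A *m B) 0 0 = A 0 0 * B 0 0.
Proof. by rewrite mxE big_ord1. Qed.

Lemma ctmx11 n (u v : 'cV[C]_n) : (ctmx v *m u) 0 0 = conjc ((ctmx u *m v) 0 0).
Proof. by rewrite -{1}(ctmxK u) -ctmx_mul /ctmx !mxE. Qed.

Lemma ge0_conj (x : C) : 0 <= x -> conjc x = x.
Proof.
move=> h; rewrite [x]complexE (ger0_Im h) mulr0 addr0.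
by rewrite conjc_real.
Qed.


Lemma mx11_entry (A : 'M[C]_1) : A = (A 0 0)%:M.
Proof. by rewrite {1}[A]mx11_scalar. Qed.

Lemma psd_rank1 n (w : 'cV[C]_n) (R0 : 'M[C]_n) : psd R0 -> psd (w *m ctmx w + R0).
Proof.
move=> hR x; rewrite mulmxDr mulmxDl mxE addr_ge0 //.
by rewrite !mulmxA -mulmxA mx11E ctmx11 mulrC mulcJ_ge0.
Qed.

Lemma herm_rank1 n (w : 'cV[C]_n) (R0 : 'M[C]_n) : Defs.hermitian R0 -> Defs.hermitian (w *m ctmx w + R0).
Proof. move=> hR; rewrite /Defs.hermitian ctmxD. rewrite ctmx_mul. rewrite ctmxK hR. by []. Qed.

Lemma trace_ct n (u : 'cV[C]_n) : \sum_(i < n) `|u i 0| ^+ 2 = \tr (u *m ctmx u).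
Proof.
rewrite /mxtrace; apply: eq_bigr => i _.
by rewrite mxE big_ord1 /ctmx !mxE sqr_normc.
Qed.


Lemma key_id n (Rm : 'M[C]_n) (h : 'cV[C]_n) (k s : C) :
  ctmx Rm = Rm -> ctmx h *m Rm *m h = s%:M -> k * k * s = k -> conjc k = k ->
  ctmx (1%:M - k *: (h *m (ctmx h *m Rm))) *m Rm *m (1%:M - k *: (h *m (ctmx h *m Rm)))
  = Rm - k *: (Rm *m h *m (ctmx h *m Rm)).
Proof.
move=> HR Hs Hk Hkc.
rewrite ctmxB ctmx1 ctmxZ !ctmx_mul ctmxK HR Hkc.
rewrite mulmxBl mul1mx -scalemxAl mulmxBl mulmxBr mulmx1 -!scalemxAl -!scalemxAr.
rewrite mulmxBr mulmx1 -!scalemxAr.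
have E1 : Rm *m h *m ctmx h *m Rm = Rm *m h *m (ctmx h *m Rm) by rewrite !mulmxA.
have E2 : Rm *m h *m ctmx h *m Rm *m (h *m (ctmx h *m Rm)) = s *: (Rm *m h *m (ctmx h *m Rm)).
  rewrite -!mulmxA (mulmxA (ctmx h)) (mulmxA (ctmx h *m Rm)) Hs mul_scalar_mx; by rewrite !scalemxAr.
have E3 : Rm *m (h *m (ctmx h *m Rm)) = Rm *m h *m (ctmx h *m Rm) by rewrite !mulmxA.
rewrite E2 E1 E3 scalerA scalerBr scalerA mulrA Hk subrr subr0.
reflexivity.
Qed.


Lemma construct n (h w : 'cV[C]_n) (R0 : 'M[C]_n) :
  Defs.hermitian R0 -> psd R0 -> 0 < (ctmx h *m (w *m ctmx w + R0) *m h) 0 0 ->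
  exists (w' : 'cV[C]_n) (R0' : 'M[C]_n), [/\ Defs.hermitian R0', psd R0', (ctmx h *m R0' *m h) 0 0 = 0,
     `|(ctmx h *m w') 0 0| ^+ 2 = (ctmx h *m (w *m ctmx w + R0) *m h) 0 0 &
     w' *m ctmx w' + R0' = w *m ctmx w + R0].
Proof.
set Rm := w *m ctmx w + R0; set s := (ctmx h *m Rm *m h) 0 0 => hH hP hs.
have HR : ctmx Rm = Rm := herm_rank1 w hH.
have hPR : psd Rm := psd_rank1 w hP.
have Hs : ctmx h *m Rm *m h = s%:M := mx11_entry _.
have sc : conjc s = s := ge0_conj (ltW hs).
pose c := (sqrtc s)^-1.
have c0 : 0 <= c by rewrite invr_ge0 sqrtc_ge0 ltW.
have cc : conjc c = c := ge0_conj c0.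
have ccs : c * c = s^-1 by rewrite -expr2 exprVn sqr_sqrtc.
pose k := s^-1.
have kc : conjc k = k by rewrite ge0_conj // invr_ge0 ltW.
have s0 : s != 0 by rewrite gt_eqF.
have Hk : k * k * s = k by rewrite -mulrA mulVf ?mulr1.
exists (c *: (Rm *m h)), (Rm - (c *: (Rm *m h)) *m ctmx (c *: (Rm *m h))).
have Eww : (c *: (Rm *m h)) *m ctmx (c *: (Rm *m h)) = k *: (Rm *m h *m (ctmx h *m Rm)).
  by rewrite ctmxZ ctmx_mul HR cc -scalemxAl -scalemxAr scalerA ccs.
pose P := 1%:M - k *: (h *m (ctmx h *m Rm)).
have KI := key_id HR Hs Hk kc.
rewrite Eww; split.
- by rewrite /Defs.hermitian ctmxB ctmxZ kc !ctmx_mul ctmxK HR.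
- rewrite -KI -/P => x.
  have -> : ctmx x *m (ctmx P *m Rm *m P) *m x = ctmx (P *m x) *m Rm *m (P *m x).
    by rewrite ctmx_mul !mulmxA.
  exact: hPR.
- have Ph : P *m h = 0.
    rewrite mulmxBl mul1mx -scalemxAl -mulmxA Hs.
    by rewrite mul_mx_scalar scalerA mulVf // scale1r subrr.
  rewrite -KI -/P.
  have -> : ctmx h *m (ctmx P *m Rm *m P) *m h = ctmx (P *m h) *m Rm *m (P *m h).
    by rewrite ctmx_mul !mulmxA.
  by rewrite Ph mulmx0 mxE.
- rewrite -scalemxAr mulmxA Hs sqr_normc !mxE eqxx mulr1n.
  rewrite (ge0_conj (x := c * s)) ?mulr_ge0 ?(ltW hs) //.
  by rewrite mulrACA ccs mulrA mulVf // mul1r.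
- by rewrite addrC subrK.
Qed.


Lemma s_split n (h w : 'cV[C]_n) (R0 : 'M[C]_n) :
  (ctmx h *m (w *m ctmx w + R0) *m h) 0 0
  = `|(ctmx h *m w) 0 0| ^+ 2 + (ctmx h *m R0 *m h) 0 0.
Proof.
by rewrite mulmxDr mulmxDl mxE !mulmxA -mulmxA mx11E (ctmx11 h w) sqr_normc.
Qed.

End Ct.

Theorem proposition3 (R : realType) (M N : nat) (hM : (1 <= M)%N) (hN : (1 <= N)%N)
  (G : 'M[R[i]]_(N, M)) (hd : 'cV[R[i]]_M) (hr : 'cV[R[i]]_N)
  (P0 Gam sigma2 : R) (hP0 : 0 < P0) (hGam : 0 < Gam) (hsigma2 : 0 < sigma2) :
  optval G (feasible_P1 G hd hr P0 Gam sigma2)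
  = optval G (feasible_P2 G hd hr P0 Gam sigma2).
Proof.
have sg0 : 0 < sigma2%:C by rewrite ltcE /= eqxx hsigma2.
have Gg0 : 0 < Gam%:C by rewrite ltcE /= eqxx hGam.
rewrite /optval; congr ereal_inf; apply/classical_sets.seteqP; split=> _ [[[w R0] v] /= Hx <-].
- exists ((w, R0), v) => //=.
  move: Hx; rewrite /feasible_P1 /feasible_P2 /=.
  set h := heff G hd hr v => -[Hs Hc]; split => //.
  case: Hc => hH htr hpsd hv.
  have d0 : 0 <= (ctmx h *m R0 *m h) 0 0 := hpsd h.
  apply: (le_trans Hs); apply: ler_wpM2l; first by rewrite exprn_ge0 // normr_ge0.
  rewrite lef_pV2 ?posrE ?lerDr // ltr_wpDl //.
- move: Hx; rewrite /feasible_P2 /=.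
  set h := heff G hd hr v => -[Hs Hc].
  case: Hc => hH htr hpsd hv.
  have d0 : 0 <= (ctmx h *m R0 *m h) 0 0 := hpsd h.
  have ale : `|(ctmx h *m w) 0 0| ^+ 2 <= (ctmx h *m (w *m ctmx w + R0) *m h) 0 0.
    by rewrite s_split lerDl.
  have Hs2 : Gam%:C <= (ctmx h *m (w *m ctmx w + R0) *m h) 0 0 / sigma2%:C.
    apply: (le_trans Hs); apply: ler_wpM2r => //.
    by rewrite invr_ge0 ltW.
  have spos : 0 < (ctmx h *m (w *m ctmx w + R0) *m h) 0 0.
    have := mulr_gt0 (lt_le_trans Gg0 Hs2) sg0.
    by rewrite divfK // gt_eqF.
  have [w' [R0' [hH' hP' h0 hn E]]] := construct hH hpsd spos.
  exists ((w', R0'), v); last first.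
    by change (crb G (w' *m ctmx w' + R0') = crb G (w *m ctmx w + R0)); rewrite E.
  change (feasible_P1 G hd hr P0 Gam sigma2 w' R0' v); split.
    by rewrite -/h h0 add0r hn.
  split => //.
  by rewrite (trace_ct w') -mxtraceD E mxtraceD -trace_ct.
Qed.
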